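(* Let $(M,d)$ be a complete pointed metric space and let $\mu,\nu$ be positive Radon measures on $\beta\widetilde{M}$ such that $\mu\preccurlyeq\nu$ and $\nu$ is concentrated on $\mathcal{R}$. Then $p_i(\operatorname{supp}\mu)\subset p_i(\operatorname{supp}\nu)$ for $i=1,2$.
   Context: $\widetilde{M}=\{(x,y)\in M\times M:x\ne y\}$, $\beta\widetilde{M}$ its Stone–Čech compactification; Radon measures identified with $C(\beta\widetilde{M})^*$; $\operatorname{supp}$ denotes the closed support of a measure. $M^u$ is the uniform (Samuel) compactification of $M$; $p_1,p_2:\beta\widetilde{M}\to M^u$ continuously extend the coordinate projections, $p=(p_1,p_2)$. $\mathcal{R}(M)=\{\xi\in M^u:\overline{d_0}(\xi)<\infty\}$, where $\overline{d_0}:M^u\to[0,\infty]$ continuously extends $x\mapsto d(x,0)$ ($0$ the base point), and $\mathcal{R}=p^{-1}(\mathcal{R}(M)\times\mathcal{R}(M))$. $G$ is the set of $g\in C(\beta\widetilde{M})$ with $d(x,y)g(x,y)\le d(x,u)g(x,u)+d(u,y)g(u,y)$ for all distinct $x,u,y\in M$; $\mu\preccurlyeq\nu$ iff $\int g\,d\mu\le\int g\,d\nu$ for all $g\in G$. Throughout, $M$ has at least three distinct points. *)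

(* Defs.v *)
From HB Require Import structures.
From mathcomp Require Import all_boot all_order all_algebra.
From mathcomp Require Import all_classical all_reals all_analysis.
Set Implicit Arguments. Unset Strict Implicit. Unset Printing Implicit Defensive.
Import Order.TTheory GRing.Theory Num.Theory.
Import numFieldNormedType.Exports.
Local Open Scope classical_set_scope.
Local Open Scope ring_scope.

Definition is_metric {R : realType} {M : Type} (d : M -> M -> R) : Prop :=
  (forall x y, 0 <= d x y) /\ (forall x y, d x y = 0 <-> x = y) /\
  (forall x y, d x y = d y x) /\ (forall x y z, d x z <= d x y + d y z).

Definition metric_cauchy {R : realType} {M : Type} (d : M -> M -> R)
  (u : nat -> M) : Prop :=
  forall e : R, 0 < e -> exists N : nat, forall m n : nat,
    (N <= m)%N -> (N <= n)%N -> d (u m) (u n) < e.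

Definition metric_complete {R : realType} {M : Type} (d : M -> M -> R) : Prop :=
  forall u : nat -> M, metric_cauchy d u ->
    exists l : M, forall e : R, 0 < e -> exists N : nat, forall n : nat,
      (N <= n)%N -> d (u n) l < e.

Definition Mtilde (M : Type) := {z : M * M | z.1 <> z.2}.

Definition dtilde {R : realType} {M : Type} (d : M -> M -> R)
  (z w : Mtilde M) : R :=
  Num.max (d (sval z).1 (sval w).1) (d (sval z).2 (sval w).2).

Definition cont_on_Mtilde {R : realType} {M : Type} (d : M -> M -> R)
  {T : topologicalType} (f : Mtilde M -> T) : Prop :=
  forall (z : Mtilde M) (U : set T), open U -> U (f z) ->
    exists2 delta : R, 0 < delta &
      forall w : Mtilde M, dtilde d z w < delta -> U (f w).

Definition cont_on_M {R : realType} {M : Type} (d : M -> M -> R)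
  {T : topologicalType} (f : M -> T) : Prop :=
  forall (x : M) (U : set T), open U -> U (f x) ->
    exists2 delta : R, 0 < delta &
      forall y : M, d x y < delta -> U (f y).

Definition bounded_fun {R : realType} {X : Type} (f : X -> R) : Prop :=
  exists C : R, forall x, `|f x| <= C.

Definition unif_cont {R : realType} {M : Type} (d : M -> M -> R)
  (f : M -> R) : Prop :=
  forall e : R, 0 < e -> exists2 delta : R, 0 < delta &
    forall x y : M, d x y < delta -> `|f x - f y| < e.

Definition is_stone_cech {R : realType} {M : Type} (d : M -> M -> R)
  (K : ptopologicalType) (iota : Mtilde M -> K) : Prop :=
  [/\ compact [set: K], hausdorff_space K, cont_on_Mtilde d iota,
      closure (range iota) = [set: K] &
      forall f : Mtilde M -> R, bounded_fun f -> cont_on_Mtilde d f ->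
        exists F : K -> R, continuous F /\ (forall z, F (iota z) = f z)].

Definition is_samuel {R : realType} {M : Type} (d : M -> M -> R)
  (Ku : topologicalType) (j : M -> Ku) : Prop :=
  [/\ compact [set: Ku], hausdorff_space Ku, cont_on_M d j,
      closure (range j) = [set: Ku] &
      forall f : M -> R, (bounded_fun f /\ unif_cont d f) <->
        exists F : Ku -> R, continuous F /\ (forall x, F (j x) = f x)].

Notation BorelT K := (g_sigma_algebraType (@open K)).

Definition radon {R : realType} {K : ptopologicalType}
  (mu : {measure set (BorelT K) -> \bar R}) : Prop :=
  (mu [set: BorelT K] < +oo)%E /\
  forall A : set (BorelT K), measurable A ->
    mu A = ereal_sup [set mu C | C in [set C : set (BorelT K) |
                                        compact (C : set K) /\ C `<=` A]].

Definition supp {R : realType} {K : ptopologicalType}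
  (mu : {measure set (BorelT K) -> \bar R}) : set K :=
  [set xi : K | forall U : set K, open U -> U xi -> (0 < mu U)%E].

Definition Gset {R : realType} {M : Type} (d : M -> M -> R)
  {K : ptopologicalType} (iota : Mtilde M -> K) : set (K -> R) :=
  [set g | continuous g /\
    forall (x u y : M) (hxy : x <> y) (hxu : x <> u) (huy : u <> y),
      d x y * g (iota (exist _ (x, y) hxy)) <=
      d x u * g (iota (exist _ (x, u) hxu)) +
      d u y * g (iota (exist _ (u, y) huy))].

Definition Gle {R : realType} {M : Type} (d : M -> M -> R)
  {K : ptopologicalType} (iota : Mtilde M -> K)
  (mu nu : {measure set (BorelT K) -> \bar R}) : Prop :=
  forall g, Gset d iota g ->
    (\int[mu]_x (g x)%:E <= \int[nu]_x (g x)%:E)%E.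

(* the set script-R = p^{-1}(R(M) x R(M)) *)
Definition Rset {R : realType} {K : ptopologicalType} {Ku : topologicalType}
  (d0bar : Ku -> \bar R) (p1 p2 : K -> Ku) : set K :=
  [set t | (d0bar (p1 t) < +oo)%E /\ (d0bar (p2 t) < +oo)%E].

(* Main.v *)
Require Import Defs.
From HB Require Import structures.
From mathcomp Require Import all_boot all_order all_algebra.
From mathcomp Require Import all_classical all_reals all_analysis.
From mathcomp Require Import measurable_realfun.
From mathcomp Require Import ring lra.
Import Order.TTheory GRing.Theory Num.Theory.
Import numFieldNormedType.Exports.
Local Open Scope classical_set_scope.
Local Open Scope ring_scope.

Section Gfun.
Context {R : realType} {M : Type} (d : M -> M -> R).
Hypothesis dm : is_metric d.

Definition Fm (phi psi : M -> R) x y := Num.min (phi x + psi y) (d x y).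
Definition gf (phi psi : M -> R) (z : Mtilde M) :=
  Fm phi psi (sval z).1 (sval z).2 / d (sval z).1 (sval z).2.

Definition lip1 (phi : M -> R) := forall x u, phi x <= phi u + d x u.

Lemma d_ge0 x y : 0 <= d x y. Proof. by case: dm. Qed.
Lemma d_sym x y : d x y = d y x. Proof. by case: dm => _ [_ []]. Qed.
Lemma d_tri x y z : d x z <= d x y + d y z. Proof. by case: dm => _ [_ [_]]. Qed.
Lemma d_xx x : d x x = 0. Proof. by case: dm => _ [/(_ x x) [_ ->]]. Qed.
Lemma d_gt0 x y : x <> y -> 0 < d x y.
Proof.
move=> xy; rewrite lt_neqAle d_ge0 andbT; apply/eqP => h.
by case: dm => _ [/(_ x y) [/(_ (esym h))]].
Qed.

Lemma Fm_tri phi psi : (forall x, 0 <= phi x) -> (forall x, 0 <= psi x) ->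
  lip1 phi -> lip1 psi -> forall x u y,
  Fm phi psi x y <= Fm phi psi x u + Fm phi psi u y.
Proof.
move=> p0 q0 lp lq x u y; rewrite /Fm.
have := p0 u; have := q0 u; have := lp x u; have := lq y u.
rewrite (d_sym y u) => h1 h2 h3 h4.
have := d_tri x u y.
case: (leP (phi x + psi y) (d x y)) => h5;
case: (leP (phi x + psi u) (d x u)) => h6;
case: (leP (phi u + psi y) (d u y)) => h7; lra.
Qed.

Lemma gf_ge0 phi psi z : (forall x, 0 <= phi x) -> (forall x, 0 <= psi x) ->
  0 <= gf phi psi z.
Proof.
move=> p0 q0; rewrite /gf /Fm; apply: divr_ge0; last exact: d_ge0.
by rewrite le_min addr_ge0 ?d_ge0.
Qed.

Lemma gf_le1 phi psi z : gf phi psi z <= 1.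
Proof.
rewrite /gf; case: z => -[x y] /= xy.
rewrite ler_pdivrMr ?d_gt0 // mul1r /Fm ge_min lexx orbT //.
Qed.

Lemma gfE phi psi x y (xy : x <> y) :
  d x y * gf phi psi (exist _ (x, y) xy) = Fm phi psi x y.
Proof. by rewrite /gf /= mulrC divfK // gt_eqF // d_gt0. Qed.


Lemma gf_cont phi psi : (forall x, 0 <= phi x) -> (forall x, 0 <= psi x) ->
  lip1 phi -> lip1 psi -> cont_on_Mtilde d (gf phi psi).
Proof.
move=> p0 q0 lp lq z U oU Uz.
have : nbhs (gf phi psi z) U by apply: open_nbhs_nbhs; split.
move=> /nbhs_ballP [e /= e0 eU].
case: z eU Uz => -[x y] /= xy eU Uz.
have D0 : 0 < d x y := d_gt0 x y xy.
exists (e * d x y / 8); first by rewrite divr_gt0 ?mulr_gt0.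
case=> -[x' y'] /= xy'; rewrite /dtilde /= gt_max => /andP[h1 h2].
apply: eU; rewrite /ball /=.
have D'0 : 0 < d x' y' := d_gt0 x' y' xy'.
have E1 := gfE phi psi x y xy; have E2 := gfE phi psi x' y' xy'.
have a'0 := gf_ge0 phi psi (exist _ (x', y') xy') p0 q0.
have a'1 := gf_le1 phi psi (exist _ (x', y') xy').
move: E1 E2 a'0 a'1.
set a := gf _ _ _; set a' := gf _ _ _ => E1 E2 a'0 a'1.
have l1 := lp x x'; have l2 := lp x' x; have l3 := lq y y'; have l4 := lq y' y.
have t1 := d_tri x x' y; have t2 := d_tri x' y' y; have t3 := d_tri x' x y'; have t4 := d_tri x y y'.
rewrite (d_sym x' x) in l2 t3; rewrite (d_sym y' y) in l4 t2.
have gx := d_ge0 x x'; have gy := d_ge0 y y'.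
have hF : `|Fm phi psi x y - Fm phi psi x' y'| <= 2 * (d x x' + d y y').
  rewrite /Fm; case: (leP (phi x + psi y) (d x y)) => h3;
  case: (leP (phi x' + psi y') (d x' y')) => h4; rewrite ler_norml; apply/andP; split; lra.
move: hF; rewrite ler_norml => /andP[hF1 hF2].
rewrite -E1 -E2 in hF1 hF2.
have k1 : (a - a') * d x y < e * d x y.
  have : a' * (d x' y' - d x y) <= 2 * (d x x' + d y y').
    have : a' * (d x' y' - d x y) <= a' * (d x x' + d y y').
      by apply: ler_wpM2l => //; lra.
    have : a' * (d x x' + d y y') <= d x x' + d y y'.
      by rewrite ler_piMl //; lra.
    lra.
  move=> hh; have : (a - a') * d x y = d x y * a - d x' y' * a' + a' * (d x' y' - d x y) by ring.
  lra.
have k2 : (a' - a) * d x y < e * d x y.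
  have : - (a' * (d x' y' - d x y)) <= 2 * (d x x' + d y y').
    have : - (a' * (d x' y' - d x y)) <= a' * (d x x' + d y y').
      rewrite -mulrN; apply: ler_wpM2l => //; lra.
    have : a' * (d x x' + d y y') <= d x x' + d y y'.
      by rewrite ler_piMl //; lra.
    lra.
  move=> hh; have : (a' - a) * d x y = d x' y' * a' - d x y * a - a' * (d x' y' - d x y) by ring.
  lra.
rewrite ltr_norml; apply/andP; split.
  by move: k2; rewrite ltr_pM2r // => ?; lra.
by move: k1; rewrite ltr_pM2r.
Qed.

Lemma gf_half (x0 : M) (c : R) z : 0 <= c ->
  (5 * c < d (sval z).1 x0 \/ 5 * c < d (sval z).2 x0) ->
  2^-1 <= gf (fun x => Num.max 0 (d x x0 - c)) (fun x => Num.max 0 (d x x0 - c)) z.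
Proof.
case: z => -[x y] /= xy c0 h.
rewrite /gf /= ler_pdivlMr ?d_gt0 // /Fm le_min; apply/andP; split; last first.
  by have := d_ge0 x y; lra.
have h1 : 0 <= Num.max 0 (d x x0 - c) by rewrite le_max lexx.
have h2 : d x x0 - c <= Num.max 0 (d x x0 - c) by rewrite le_max lexx orbT.
have h3 : 0 <= Num.max 0 (d y x0 - c) by rewrite le_max lexx.
have h4 : d y x0 - c <= Num.max 0 (d y x0 - c) by rewrite le_max lexx orbT.
have t := d_tri x x0 y; rewrite (d_sym x0 y) in t.
have := d_ge0 x x0; have := d_ge0 y x0.
case: h => h; lra.
Qed.

Lemma lip_phi (x0 : M) (c : R) : lip1 (fun x => Num.max 0 (d x x0 - c)).
Proof.
move=> x u.
have h1 : 0 <= Num.max 0 (d u x0 - c) by rewrite le_max lexx.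
have h2 : d u x0 - c <= Num.max 0 (d u x0 - c) by rewrite le_max lexx orbT.
have := d_tri x u x0; have := d_ge0 x u.
rewrite ge_max; move=> ? ?; apply/andP; split; lra.
Qed.

Lemma phi_ge0 (x0 : M) (c : R) x : 0 <= Num.max 0 (d x x0 - c).
Proof. by rewrite le_max lexx. Qed.

End Gfun.
Lemma dens_le {R : realType} {K : topologicalType} {T : Type} (iota : T -> K)
  (hd : closure (range iota) = setT) (g : K -> R) (cg : continuous g)
  (O : set K) (oO : open O) s (Os : O s) (c : R) :
  (forall z, O (iota z) -> g (iota z) <= c) -> g s <= c.
Proof.
move=> H; rewrite leNgt; apply/negP => cs.
have : closure (range iota) s by rewrite hd.
move=> /(_ (O `&` g @^-1` [set r | c < r])) [].
  apply: open_nbhs_nbhs; split => //; apply: openI => //.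
  by apply: open_comp; [move=> *; exact: cg|exact: open_gt].
move=> _ [[z _ <-] [Oz /= czg]]; by move: czg; rewrite ltNge H.
Qed.

Lemma dens_ge {R : realType} {K : topologicalType} {T : Type} (iota : T -> K)
  (hd : closure (range iota) = setT) (g : K -> R) (cg : continuous g)
  (O : set K) (oO : open O) s (Os : O s) (c : R) :
  (forall z, O (iota z) -> c <= g (iota z)) -> c <= g s.
Proof.
move=> H; rewrite leNgt; apply/negP => cs.
have : closure (range iota) s by rewrite hd.
move=> /(_ (O `&` g @^-1` [set r | r < c])) [].
  apply: open_nbhs_nbhs; split => //; apply: openI => //.
  by apply: open_comp; [move=> *; exact: cg|exact: open_lt].
move=> _ [[z _ <-] [Oz /= czg]]; by move: czg; rewrite ltNge H.
Qed.
Lemma open_mK {K : ptopologicalType} (O : set K) :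
  open O -> measurable (O : set (BorelT K)).
Proof. by move=> oO; exact: sub_gen_smallest. Qed.

Lemma closed_mK {K : ptopologicalType} (O : set K) :
  closed O -> measurable (O : set (BorelT K)).
Proof.
move=> cO; rewrite -(setCK O); apply: measurableC; apply: open_mK.
exact: closed_openC.
Qed.

Lemma cont_mK {R : realType} {K : ptopologicalType} (g : K -> R) :
  continuous g -> measurable_fun setT (fun x : BorelT K => (g x)%:E).
Proof.
move=> cg; apply/measurable_EFinP.
apply: (measurability _ (RGenOpens.measurableE R)) => _ [_ [a [b ->] <-]].
rewrite setTI; apply: open_mK; apply: open_comp; first by move=> *; exact: cg.
exact: interval_open.
Qed.

Lemma null_cover {R : realType} {K : ptopologicalType}
  (nu : {measure set (BorelT K) -> \bar R}) (Cp : set K) :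
  compact Cp -> measurable (Cp : set (BorelT K)) ->
  (forall s, Cp s -> exists U : set K, [/\ open U, U s & nu U = 0%E]) ->
  nu Cp = 0%E.
Proof.
move=> cC mC H.
have /choice [U hU] : forall s : K, exists V : set K,
    Cp s -> [/\ open V, V s & nu V = 0%E].
  move=> s; have [Cs|nCs] := pselect (Cp s).
    by have [V ?] := H s Cs; exists V.
  by exists set0.
have : cover_compact Cp by rewrite -compact_cover.
move=> /(_ K Cp U) [].
- by move=> i /hU [].
- by move=> s Cs; exists s => //; have [] := hU s Cs.
move=> D' sD' CD'.
set s := finmap.enum_fset D'.
pose F n := if (n < size s)%N then U (nth point s n) else set0.
apply/eqP; rewrite eq_le measure_ge0 andbT.
have mF n : measurable (F n : set (BorelT K)).
  rewrite /F; case: ifP => ns; last exact: measurable0.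
  by apply: open_mK; have [] := hU _ (set_mem (sD' _ (mem_nth point ns))).
apply: le_trans (measure_sigma_subadditive nu mF mC _) _.
  move=> x /CD' [i /= iD' Uix]; exists (index i s) => //.
  by rewrite /F index_mem iD' nth_index.
rewrite eseries0 // => n _ _; rewrite /F; case: ifP => ns; last by rewrite measure0.
by have [] := hU _ (set_mem (sD' _ (mem_nth point ns))).
Qed.

Lemma int_le_ind {R : realType} {K : ptopologicalType}
  (mu : {measure set (BorelT K) -> \bar R}) (g : K -> R) (cg : continuous g)
  (A : set K) (mA : measurable (A : set (BorelT K))) :
  (forall x, 0 <= g x) -> (forall x, g x <= 1) -> (forall x, ~ A x -> g x = 0) ->
  (\int[mu]_x (g x)%:E <= mu A)%E.
Proof.
move=> g0 g1 gA.
rewrite (_ : mu A = \int[mu]_x (\1_A x)%:E)%E; last by rewrite integral_indic // setIT.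
apply: ge0_le_integral => //.
- by move=> x _; rewrite lee_fin.
- exact: cont_mK.
- by apply/measurable_EFinP; exact: measurable_indic.
- move=> x _; rewrite lee_fin indicE; have [Ax|nAx] := pselect (A x).
    by rewrite mem_set.
  by rewrite memNset // gA.
Qed.

Lemma int_ge_ind {R : realType} {K : ptopologicalType}
  (mu : {measure set (BorelT K) -> \bar R}) (g : K -> R) (cg : continuous g)
  (A : set K) (mA : measurable (A : set (BorelT K))) (c : R) (c0 : 0 <= c) :
  (forall x, 0 <= g x) -> (forall x, A x -> c <= g x) ->
  (c%:E * mu A <= \int[mu]_x (g x)%:E)%E.
Proof.
move=> g0 gA.
rewrite (_ : mu A = \int[mu]_x (\1_A x)%:E)%E; last by rewrite integral_indic // setIT.
rewrite -(@integralZl_indic _ _ _ mu setT measurableT (fun _ => A) c) //.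
  2: by rewrite ltNge c0.
apply: ge0_le_integral => //.
- by move=> x _; rewrite lee_fin mulr_ge0.
- apply/measurable_EFinP; apply: measurable_funM => //; exact: measurable_indic.
- exact: cont_mK.
- move=> x _; rewrite lee_fin indicE; have [Ax|nAx] := pselect (A x).
    by rewrite mem_set // mulr1; apply: gA.
  by rewrite memNset // mulr0.
Qed.

Section Main.
Context {R : realType} {M : Type} (d : M -> M -> R) (x0 : M)
  (K : ptopologicalType) (iota : Mtilde M -> K)
  (Ku : topologicalType) (j : M -> Ku)
  (p1 p2 : K -> Ku) (d0bar : Ku -> \bar R)
  (mu nu : {measure set (BorelT K) -> \bar R}).
Hypotheses (dm : is_metric d) (sc : is_stone_cech d iota) (sa : is_samuel d j)
  (cp1 : continuous p1) (hp1 : forall z : Mtilde M, p1 (iota z) = j (sval z).1)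
  (cp2 : continuous p2) (hp2 : forall z : Mtilde M, p2 (iota z) = j (sval z).2)
  (cd0 : continuous d0bar) (hd0 : forall x : M, d0bar (j x) = (d x x0)%:E)
  (rnu : radon nu) (Gmn : Gle d iota mu nu)
  (nR : nu (~` Rset d0bar p1 p2) = 0%E).

Lemma dense_iota : closure (range iota) = setT.
Proof. by case: sc. Qed.

Lemma ext phi psi : (forall x, 0 <= phi x) -> (forall x, 0 <= psi x) ->
  lip1 d phi -> lip1 d psi ->
  exists g : K -> R, [/\ continuous g, Gset d iota g,
    forall z, g (iota z) = gf d phi psi z & forall s, 0 <= g s <= 1].
Proof.
move=> p0 q0 lp lq.
case: sc => _ _ _ _ /(_ (gf d phi psi)) [].
- exists 1 => z; rewrite ger0_norm ?gf_le1 ?gf_ge0 //.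
- exact: gf_cont.
move=> g [cg gE]; exists g; split => //.
- split => // x u y hxy hxu huy; rewrite !gE !gfE //.
  exact: Fm_tri.
- move=> s; apply/andP; split.
    apply: (@dens_ge R K _ iota dense_iota g cg setT openT s I 0) => z _.
    by rewrite gE gf_ge0.
  apply: (@dens_le R K _ iota dense_iota g cg setT openT s I 1) => z _.
  by rewrite gE gf_le1.
Qed.

Definition Rn (n : nat) : set K :=
  [set s | (d0bar (p1 s) < (n.+1)%:R%:E)%E /\ (d0bar (p2 s) < (n.+1)%:R%:E)%E].

Lemma c1 : continuous (d0bar \o p1).
Proof. by move=> x; apply: continuous_comp; [exact: cp1|exact: cd0]. Qed.
Lemma c2 : continuous (d0bar \o p2).
Proof. by move=> x; apply: continuous_comp; [exact: cp2|exact: cd0]. Qed.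

Lemma open_pre {f : K -> \bar R} (cf : continuous f) {A : set (\bar R)} :
  open A -> open (f @^-1` A).
Proof. by move=> oA; apply: open_comp => // x _; exact: cf. Qed.

Lemma Rn_open n : open (Rn n).
Proof.
have := openI (open_pre c1 (@open_ereal_lt_ereal R (n.+1)%:R%:E))
  (open_pre c2 (@open_ereal_lt_ereal R (n.+1)%:R%:E)).
by [].
Qed.

Lemma Rset_open : open (Rset d0bar p1 p2).
Proof.
have := openI (open_pre c1 (@open_ereal_lt_ereal R +oo%E))
  (open_pre c2 (@open_ereal_lt_ereal R +oo%E)).
by [].
Qed.

Lemma Rn_mono m n : (m <= n)%N -> Rn m `<=` Rn n.
Proof.
move=> mn s [h1 h2]; have le : ((m.+1)%:R%:E <= (n.+1)%:R%:E :> \bar R)%E.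
  by rewrite lee_fin ler_nat.
by split; apply: lt_le_trans le.
Qed.

Lemma ereal_lt_nat (v : \bar R) : (v < +oo)%E -> exists n : nat, (v < (n.+1)%:R%:E)%E.
Proof.
case: v => [r _| //|_]; last by exists 0%N; rewrite ltNye.
exists (Num.Def.trunc `|r|); rewrite lte_fin.
by apply: le_lt_trans (truncnS_gt _); rewrite ler_norm.
Qed.

Lemma Rset_cover s : Rset d0bar p1 p2 s -> exists n, Rn n s.
Proof.
case=> /ereal_lt_nat [a ha] /ereal_lt_nat [b hb]; exists (maxn a b).
have le1 : (((a.+1)%:R)%:E <= ((maxn a b).+1)%:R%:E :> \bar R)%E.
  by rewrite lee_fin ler_nat ltnS leq_maxl.
have le2 : (((b.+1)%:R)%:E <= ((maxn a b).+1)%:R%:E :> \bar R)%E.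
  by rewrite lee_fin ler_nat ltnS leq_maxr.
by split; [apply: lt_le_trans le1|apply: lt_le_trans le2].
Qed.

Lemma Rn_sub n : Rn n `<=` Rset d0bar p1 p2.
Proof. by move=> s [h1 h2]; split; [exact: (lt_trans h1 (ltry _))|exact: (lt_trans h2 (ltry _))]. Qed.

Lemma key_X n : ((2^-1)%:E * mu (~` Rset d0bar p1 p2) <= nu (~` Rn n))%E.
Proof.
set c : R := (n.+1)%:R.
have c0 : 0 <= c by [].
have [g [cg Gg gE g01]] := ext _ _ (phi_ge0 d x0 c) (phi_ge0 d x0 c)
  (lip_phi d dm x0 c) (lip_phi d dm x0 c).
have g0 x : 0 <= g x by case/andP: (g01 x).
have g1 x : g x <= 1 by case/andP: (g01 x).
have hmu : ((2^-1)%:E * mu (~` Rset d0bar p1 p2) <= \int[mu]_x (g x)%:E)%E.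
  apply: int_ge_ind => //.
  - by apply: measurableC; apply: open_mK; exact: Rset_open.
  - move=> t /not_andP [] h.
    + refine (@dens_ge R K _ iota dense_iota g cg
        ((d0bar \o p1) @^-1` [set v | ((5 * c)%:E < v)%E])
        (open_pre c1 (@open_ereal_gt_ereal R (5 * c)%:E)) t _ (2^-1) _).
        move: h => /negP; rewrite -leNgt leye_eq => /eqP /= ->; exact: ltry.
      move=> z /=; rewrite hp1 hd0 lte_fin => hz; rewrite gE.
      by apply: gf_half => //; left.
    + refine (@dens_ge R K _ iota dense_iota g cg
        ((d0bar \o p2) @^-1` [set v | ((5 * c)%:E < v)%E])
        (open_pre c2 (@open_ereal_gt_ereal R (5 * c)%:E)) t _ (2^-1) _).
        move: h => /negP; rewrite -leNgt leye_eq => /eqP /= ->; exact: ltry.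
      move=> z /=; rewrite hp2 hd0 lte_fin => hz; rewrite gE.
      by apply: gf_half => //; right.
have hnu : (\int[nu]_x (g x)%:E <= nu (~` Rn n))%E.
  apply: int_le_ind => //.
  - by apply: measurableC; apply: open_mK; exact: Rn_open.
  - move=> s /contrapT Rns; apply/eqP; rewrite eq_le g0 andbT.
    apply: (@dens_le R K _ iota dense_iota g cg (Rn n) (Rn_open n) s Rns).
    move=> z []; rewrite hp1 hp2 !hd0 !lte_fin => h1 h2; rewrite gE.
    case: z h1 h2 => -[x y] /= xy h1 h2.
    rewrite /gf /Fm /=.
    have -> : Num.max 0 (d x x0 - c) = 0 by apply/max_idPl; rewrite /c; lra.
    have -> : Num.max 0 (d y x0 - c) = 0 by apply/max_idPl; rewrite /c; lra.
    by rewrite addr0 (min_idPl (d_ge0 d dm x y)) mul0r.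
by apply: (le_trans hmu); apply: (le_trans _ hnu); exact: Gmn.
Qed.

Lemma muR0 : mu (~` Rset d0bar p1 p2) = 0%E.
Proof.
have eqC : \bigcap_n ~` Rn n = ~` Rset d0bar p1 p2.
  rewrite -setC_bigcup; congr (~` _); apply/seteqP; split.
    by move=> s [n _ /Rn_sub].
  by move=> s /Rset_cover [n hn]; exists n.
have mC n : measurable (~` Rn n : set (BorelT K)).
  by apply: measurableC; apply: open_mK; exact: Rn_open.
have fin : (nu (~` Rn 0) < +oo)%E.
  apply: (le_lt_trans _ (proj1 rnu)); apply: le_measure; rewrite ?inE //.
have mcap : measurable (\bigcap_n ~` Rn n : set (BorelT K)).
  by rewrite eqC; apply: measurableC; apply: open_mK; exact: Rset_open.
have hom : {homo (fun n => ~` Rn n) : n m / (n <= m)%N >-> (m <= n)%O}.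
  by move=> a b ab; apply/subsetPset; apply: subsetC; exact: Rn_mono.
have cvgn := @nonincreasing_cvg_mu _ _ _ nu (fun n => ~` Rn n) fin mC mcap hom.
rewrite eqC nR in cvgn.
have : ((2^-1)%:E * mu (~` Rset d0bar p1 p2) <= lim (nu (~` Rn n) @[n --> \oo]))%E.
  by apply: lime_ge; [exact: cvgP cvgn|exact: nearW key_X].
rewrite (cvg_lim (@ereal_hausdorff _) cvgn) pmule_rle0 ?lte_fin ?invr_gt0 //.
by move=> h; apply/eqP; rewrite eq_le h measure_ge0.
Qed.

Lemma not_supp (m : {measure set (BorelT K) -> \bar R}) s : ~ supp m s ->
  exists U : set K, [/\ open U, U s & m U = 0%E].
Proof.
move=> nSs.
have [U [oU Us nU]] : exists U : set K, [/\ open U, U s & ~ (0 < m U)%E].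
  apply: contrapT => hn; apply: nSs => U oU Us; apply: contrapT => h; apply: hn.
  by exists U.
exists U; split => //; apply/eqP; rewrite eq_le measure_ge0 andbT leNgt.
exact/negP.
Qed.

Lemma supp_closed (m : {measure set (BorelT K) -> \bar R}) : closed (supp m).
Proof.
rewrite -openC openE => s /not_supp [U [oU Us mU]].
have : nbhs s U by apply: open_nbhs_nbhs.
apply: filterS => s' Us' Ss'.
by have := Ss' U oU Us'; rewrite mU ltxx.
Qed.

Lemma main_b (b : bool) (q : K -> Ku) (pr : Mtilde M -> M) (cq : continuous q)
  (hq : forall z, q (iota z) = j (pr z))
  (hpr : forall z, pr z = if b then (sval z).1 else (sval z).2) :
  q @` supp mu `<=` q @` supp nu.
Proof.
move=> _ [t smt <-]; apply: contrapT => nC.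
set S := supp nu; set C := q @` S.
case: sc => cK _ _ _ _.
case: sa => cKu hKu _ _ sa5.
have clS : closed S := supp_closed nu.
have cC : compact C.
  apply: continuous_compact; first exact: continuous_subspaceT.
  exact: (subclosed_compact clS cK (@subsetT _ S)).
have clC : closed C := compact_closed hKu cC.
have cl1 : closed [set q t] := @accessible_closed_set1 _ (hausdorff_accessible hKu) (q t).
have [F [cF rF F0 F1]] : exists F : Ku -> R, [/\ continuous F,
    range F `<=` `[0, 1], F @` C `<=` [set 0] & F @` [set q t] `<=` [set 1]].
  apply/(@uniform_separatorP Ku R).
  apply: ((@normal_separatorP R Ku).1 (compact_normal hKu cKu)) => //.
  by apply/seteqP; split => // u [Cu /= uq]; apply: nC; rewrite -uq.
have Ft : F (q t) = 1 by apply: F1; exists (q t).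
have FS s : S s -> F (q s) = 0.
  by move=> Ss; apply: F0; exists (q s) => //; exists s.
have [_ uc] : Defs.bounded_fun (F \o j) /\ unif_cont d (F \o j).
  by apply/(sa5 (F \o j)); exists F.
have h3 : (0:R) < 3^-1 by rewrite invr_gt0.
have [eta eta0 heta] := uc (3^-1) h3.
pose A := [set x | F (j x) < 3^-1].
pose E x := [set eta] `|` [set d x a | a in A].
pose th x := inf (E x).
have En x : E x !=set0 by exists eta; left.
have Elb x : lbound (E x) 0.
  move=> e [->|[a _ <-]]; [exact: ltW|exact: d_ge0].
have hlb x : has_lbound (E x) by exists 0; exact: Elb.
have th0 x : 0 <= th x by apply: lb_le_inf.
have thle x e : E x e -> th x <= e by move=> Ee; apply: (ge_inf (hlb x)).
have thA x : A x -> th x = 0.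
  move=> Ax; apply/eqP; rewrite eq_le th0 andbT -(d_xx d dm x).
  by apply: thle; right; exists x.
have thW x : 2 * 3^-1 < F (j x) -> eta <= th x.
  move=> Wx; apply: lb_le_inf => // e [->|[a Aa <-]] //.
  rewrite leNgt; apply/negP => /heta /=; rewrite ltr_norml => /andP[_].
  move: Aa; rewrite /A /=; lra.
have thL : lip1 d th.
  move=> x u; rewrite -lerBlDr; apply: lb_le_inf => // e [->|[a Aa <-]].
    have := thle x eta (or_introl erefl); have := d_ge0 d dm x u; lra.
  have := thle x (d x a) (or_intror (ex_intro2 _ _ a Aa erefl)).
  have := d_tri d dm x u a; lra.
pose phi := if b then th else (fun=> 0).
pose psi := if b then (fun=> 0) else th.
have p0 x : 0 <= phi x by rewrite /phi; case: ifP.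
have q0 x : 0 <= psi x by rewrite /psi; case: ifP.
have lip0 : lip1 d (fun=> 0) by move=> x u; rewrite add0r d_ge0.
have lp : lip1 d phi by rewrite /phi; case: ifP.
have lq : lip1 d psi by rewrite /psi; case: ifP.
have key z : phi (sval z).1 + psi (sval z).2 = th (pr z).
  by rewrite hpr /phi /psi; case: ifP => _; rewrite ?addr0 ?add0r.
have [g [cg Gg gE g01]] := ext _ _ p0 q0 lp lq.
have g0 x : 0 <= g x by case/andP: (g01 x).
have g1 x : g x <= 1 by case/andP: (g01 x).
have gfE' z : gf d phi psi z = Num.min (th (pr z)) (d (sval z).1 (sval z).2) /
    d (sval z).1 (sval z).2 by rewrite /gf /Fm key.
have cFq : continuous (F \o q) by move=> x; apply: continuous_comp; [exact: cq|exact: cF].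
pose O := (F \o q) @^-1` [set r : R | r < 3^-1].
have oO : open O by apply: open_comp; [move=> *; exact: cFq|exact: open_lt].
have gO s : O s -> g s = 0.
  move=> Os; apply/eqP; rewrite eq_le g0 andbT.
  apply: (@dens_le R K _ iota dense_iota g cg O oO s Os) => z.
  rewrite /O /= hq => Az; rewrite gE gfE' thA //.
  case: z Az => -[x y] /= xy _.
  by rewrite (min_idPl (d_ge0 d dm x y)) mul0r.
have SO : S `<=` O by move=> s Ss; rewrite /O /= FS //.
have nuO : nu (~` O) = 0%E.
  apply: null_cover.
  - exact: (subclosed_compact (open_closedC oO) cK (@subsetT _ _)).
  - by apply: measurableC; exact: open_mK.
  - by move=> s nOs; apply: not_supp => Ss; apply: nOs; exact: SO.
have hnu : (\int[nu]_x (g x)%:E <= 0)%E.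
  rewrite -nuO; apply: int_le_ind => //.
  - by apply: measurableC; exact: open_mK.
  - by move=> s /contrapT; exact: gO.
pose Wq := (F \o q) @^-1` [set r : R | 2 * 3^-1 < r].
have oW : open Wq by apply: open_comp; [move=> *; exact: cFq|exact: open_gt].
have Wt : Wq t by rewrite /Wq /= Ft; lra.
have muW : (0 < mu Wq)%E := smt Wq oW Wt.
pose U m := Wq `&` Rn m.
have oU m : open (U m) by apply: openI => //; exact: Rn_open.
pose eps (m : nat) := Num.min 1 (eta / (2 * (m.+1)%:R)).
have eps0 m : 0 < eps m by rewrite lt_min ltr01 /= divr_gt0 // mulr_gt0.
have gU m s : U m s -> eps m <= g s.
  move=> Us; apply: (@dens_ge R K _ iota dense_iota g cg (U m) (oU m) s Us).
  move=> z [Wz [h1 h2]]; rewrite gE gfE'.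
  move: Wz h1 h2; rewrite /Wq /= hq hp1 hp2 !hd0 !lte_fin => /thW Wz h1 h2.
  case: z Wz h1 h2 => -[x y] /= xy Wz h1 h2.
  have D0 := d_gt0 d dm x y xy.
  have Dc : d x y < 2 * (m.+1)%:R.
    have := d_tri d dm x x0 y; rewrite (d_sym d dm x0 y); lra.
  rewrite ler_pdivlMr // le_min; apply/andP; split.
    have : eps m * d x y <= eps m * (2 * (m.+1)%:R).
      by apply: ler_wpM2l; [exact: ltW|exact: ltW].
    have : eps m * (2 * (m.+1)%:R) <= eta.
      by rewrite -ler_pdivlMr ?mulr_gt0 // ge_min lexx orbT.
    lra.
  by rewrite ler_piMl ?ge_min ?lexx //; exact: ltW.
have [[m mUm]|allm] := pselect (exists m, (0 < mu (U m))%E).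
  have mU : measurable (U m : set (BorelT K)) by exact: open_mK.
  have := int_ge_ind mu g cg (U m) mU (eps m) (ltW (eps0 m)) g0 (gU m).
  move=> h1; have := le_trans h1 (le_trans (Gmn _ Gg) hnu).
  by rewrite leNgt mule_gt0 // lte_fin.
have U0 m : mu (U m) = 0%E.
  apply/eqP; rewrite eq_le measure_ge0 andbT leNgt; apply/negP => h.
  by apply: allm; exists m.
pose G n := if n is m.+1 then U m else ~` Rset d0bar p1 p2.
have mG n : measurable (G n : set (BorelT K)).
  case: n => [|m] /=; last exact: open_mK.
  by apply: measurableC; apply: open_mK; exact: Rset_open.
have mW : measurable (Wq : set (BorelT K)) by exact: open_mK.
have := measure_sigma_subadditive mu mG mW.
move=> /(_ _) h; have {h} : (mu Wq <= 0)%E.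
  rewrite -(eseries0 (N := 0%N) (P := xpredT) (f := fun n => mu (G n))).
    apply: h => s Ws; have [Rs|nRs] := pselect (Rset d0bar p1 p2 s).
      by have [m Rm] := Rset_cover _ Rs; exists m.+1.
    by exists 0%N.
  by move=> [|m] _ _ /=; [exact: muR0|exact: U0].
by rewrite leNgt muW.
Qed.

End Main.

Theorem corollary3p30 (R : realType) (M : Type) (d : M -> M -> R) (x0 : M)
  (K : ptopologicalType) (iota : Mtilde M -> K)
  (Ku : topologicalType) (j : M -> Ku)
  (p1 p2 : K -> Ku) (d0bar : Ku -> \bar R)
  (mu nu : {measure set (BorelT K) -> \bar R}) :
  is_metric d -> metric_complete d ->
  (exists a b c : M, [/\ a <> b, a <> c & b <> c]) ->
  is_stone_cech d iota -> is_samuel d j ->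
  continuous p1 -> (forall z : Mtilde M, p1 (iota z) = j (sval z).1) ->
  continuous p2 -> (forall z : Mtilde M, p2 (iota z) = j (sval z).2) ->
  continuous d0bar -> (forall x : M, d0bar (j x) = (d x x0)%:E) ->
  radon mu -> radon nu ->
  Gle d iota mu nu ->
  nu (~` Rset d0bar p1 p2) = 0%E ->
  p1 @` supp mu `<=` p1 @` supp nu /\ p2 @` supp mu `<=` p2 @` supp nu.
Proof.
move=> dm _ _ sc sa cp1 hp1 cp2 hp2 cd0 hd0 _ rnu Gmn nR; split.
- exact: (@main_b R M d x0 K iota Ku j p1 p2 d0bar mu nu dm sc sa cp1 hp1 cp2 hp2
    cd0 hd0 rnu Gmn nR true p1 (fun z => (sval z).1) cp1 hp1 (fun z => erefl)).
- exact: (@main_b R M d x0 K iota Ku j p1 p2 d0bar mu nu dm sc sa cp1 hp1 cp2 hp2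
    cd0 hd0 rnu Gmn nR false p2 (fun z => (sval z).2) cp2 hp2 (fun z => erefl)).
Qed.
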